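(* Let $V$ be a finite set, $f:2^V\to\mathbb{R}_+$ nonnegative submodular with $f(\emptyset)=0$, $t_1,\ldots,t_k\in V$ distinct, and $\mathbf{x}=(x_{i,j})_{i\in[k],j\in V}$ with $x_{i,j}\ge0$, $\sum_{i=1}^k x_{i,j}=1$ for all $j\in V$, and $x_{i,t_i}=1$ for all $i$. For $\theta\in[0,1]$ let $A_i(\theta)=\{j: x_{i,j}>\theta\}$ and $B(\theta)=\{j: 1-\max_i x_{i,j}\ge\theta\}$. Then $$\sum_{i=1}^k\int_0^{1/2} f(A_i(\theta))\,d\theta\ \ge\ \sum_{i=1}^k\int_0^{1/2} f(A_i(\theta)\cup B(\theta))\,d\theta-(k-2)\int_0^{1/2} f(B(\theta))\,d\theta.$$ *)

(* Defs.v *)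
From Stdlib Require Import Reals.
From Coquelicot Require Import Coquelicot.
From mathcomp Require Import all_boot.
Set Implicit Arguments. Unset Strict Implicit. Unset Printing Implicit Defensive.

Open Scope R_scope.

Definition Rltb (a b : R) : bool := if Rlt_dec a b then true else false.
Definition Rleb (a b : R) : bool := if Rle_dec a b then true else false.

Definition Rsum (k : nat) (F : 'I_k -> R) : R := \big[Rplus/0]_(i < k) F i.
Definition Rmaxi (k : nat) (F : 'I_k -> R) : R := \big[Rmax/0]_(i < k) F i.

Definition submodular (V : finType) (f : {set V} -> R) : Prop :=
  forall A B : {set V}, f (A :|: B) + f (A :&: B) <= f A + f B.

Definition Aset (V : finType) (k : nat) (x : 'I_k -> V -> R) (i : 'I_k) (th : R)
  : {set V} := [set j | Rltb th (x i j)].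

Definition Bset (V : finType) (k : nat) (x : 'I_k -> V -> R) (th : R) : {set V} :=
  [set j | Rleb th (1 - Rmaxi (fun i => x i j))].

(* Main.v *)
From HB Require Import structures.
Require Import Defs.
From Stdlib Require Import Reals Lra Lia List.
From Coquelicot Require Import Coquelicot.
From mathcomp Require Import all_boot.
Open Scope R_scope.



Lemma mm a b y : a <= b -> Rmin a b < y < Rmax a b -> a < y < b.
Proof. intros H H'. rewrite Rmin_left in H'; [|lra]. rewrite Rmax_right in H'; lra. Qed.

Lemma step_ex (h : R -> R) (L : list R) : forall a b, a <= b ->
  (forall t1 t2, a < t1 -> t1 <= t2 -> t2 < b ->
     (forall c, In c L -> a < c < b -> ~ (t1 <= c <= t2)) -> h t1 = h t2) ->
  ex_RInt h a b.
Proof.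
induction L as [|c L IH]; intros a b Hab H.
- destruct (Req_dec a b) as [->|Hne]; [apply ex_RInt_point|].
  apply (ex_RInt_ext (fun _ => h ((a+b)/2))); [|apply ex_RInt_const].
  intros y Hy; apply mm in Hy; [|lra].
  destruct (Rle_dec y ((a+b)/2)).
  + symmetry; apply H; simpl; try lra; tauto.
  + apply H; simpl; try lra; tauto.
- destruct (Rlt_dec a c); [destruct (Rlt_dec c b)|].
  + apply ex_RInt_Chasles with c.
    * apply IH; [lra|]. intros t1 t2 H1 H2 H3 Hc. apply H; try lra.
      intros c' [<-|Hin] Hc'; [intro; lra|]. intro Hq; apply (Hc c'); auto; lra.
    * apply IH; [lra|]. intros t1 t2 H1 H2 H3 Hc. apply H; try lra.
      intros c' [<-|Hin] Hc'; [intro; lra|]. intro Hq; apply (Hc c'); auto; lra.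
  + apply IH; auto. intros t1 t2 H1 H2 H3 Hc. apply H; auto.
    intros c' [<-|Hin] Hc'; [intro; lra|]. apply Hc; auto.
  + apply IH; auto. intros t1 t2 H1 H2 H3 Hc. apply H; auto.
    intros c' [<-|Hin] Hc'; [intro; lra|]. apply Hc; auto.
Qed.

Definition pc (L : list R) {T} (g : R -> T) := forall t1 t2, t1 <= t2 ->
  (forall c, In c L -> ~ (t1 <= c <= t2)) -> g t1 = g t2.

Lemma pc_ex L (h : R -> R) a b : a <= b -> pc L h -> ex_RInt h a b.
Proof.
intros Hab Hp. apply (step_ex h L); auto.
intros t1 t2 H1 H2 H3 Hc. apply Hp; auto. intros c Hin Hc'. apply (Hc c Hin); auto; lra.
Qed.

Lemma ind_int (g : R -> R) v m : 0 <= m <= 1/2 ->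
  (forall t, 0 < t < m -> g t = v) -> (forall t, m < t < 1/2 -> g t = 0) ->
  RInt g 0 (1/2) = v * m.
Proof.
intros Hm H1 H2.
assert (E1 : ex_RInt g 0 m).
{ apply (ex_RInt_ext (fun _ => v)); [|apply ex_RInt_const].
  intros y Hy; apply mm in Hy; [|lra].
  symmetry; auto. }
assert (E2 : ex_RInt g m (1/2)).
{ apply (ex_RInt_ext (fun _ => 0)); [|apply ex_RInt_const].
  intros y Hy; apply mm in Hy; [|lra].
  symmetry; auto. }
rewrite <- (RInt_Chasles g 0 m (1/2) E1 E2).
rewrite (RInt_ext g (fun _ => v) 0 m).
2:{ intros y Hy; apply mm in Hy; [|lra]. auto. }
rewrite (RInt_ext g (fun _ => 0) m (1/2)).
2:{ intros y Hy; apply mm in Hy; [|lra]. auto. }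
rewrite !RInt_const. unfold scal, plus; simpl. unfold mult; simpl. unfold plus; simpl. ring.
Qed.

Lemma RInt_sum (I : eqType) (r : seq I) (F : I -> R -> R) a b :
  (forall j, ex_RInt (F j) a b) ->
  ex_RInt (fun t => \big[Rplus/0]_(j <- r) F j t) a b /\
  RInt (fun t => \big[Rplus/0]_(j <- r) F j t) a b = \big[Rplus/0]_(j <- r) RInt (F j) a b.
Proof.
intros HF. induction r as [|j r [IH1 IH2]].
- rewrite big_nil. split.
  + apply (ex_RInt_ext (fun _ => 0)); [intros; rewrite big_nil; auto|apply ex_RInt_const].
  + rewrite (RInt_ext _ (fun _ => 0)); [|intros; rewrite big_nil; auto].
    rewrite RInt_const. unfold scal; simpl; unfold mult; simpl; ring.
- rewrite big_cons. split.
  + apply (ex_RInt_ext (fun t => plus (F j t) (\big[Rplus/0]_(j0 <- r) F j0 t))).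
    * intros; rewrite big_cons; auto.
    * apply (ex_RInt_plus (F j) (fun t => \big[Rplus/0]_(j0 <- r) F j0 t)); auto.
  + rewrite (RInt_ext _ (fun t => plus (F j t) (\big[Rplus/0]_(j0 <- r) F j0 t))).
    * rewrite (RInt_plus (F j) (fun t => \big[Rplus/0]_(j0 <- r) F j0 t)); auto. rewrite IH2; auto.
    * intros; rewrite big_cons; auto.
Qed.



Lemma Rplus_assoc' : associative Rplus. Proof. intros a b d; ring. Qed.
Lemma Rplus_comm' : commutative Rplus. Proof. intros a b; ring. Qed.
Lemma Rplus_0_l' : left_id 0 Rplus. Proof. intros a; ring. Qed.
HB.instance Definition _ := Monoid.isComLaw.Build R 0 Rplus Rplus_assoc' Rplus_comm' Rplus_0_l'.

Section Greedy.
Variables (V : finType) (f : {set V} -> R) (c : V -> R).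
Hypothesis f_sub : submodular f.
Hypothesis f0 : f set0 = 0.

Definition bef (a b : V) : bool := Rltb (c b) (c a) ||
  (Rleb (c a) (c b) && Rleb (c b) (c a) && (enum_rank a < enum_rank b)%N).

Lemma befP a b : bef a b <-> (c b < c a \/ (c a = c b /\ (enum_rank a < enum_rank b)%N)).
Proof.
unfold bef, Rltb, Rleb.
destruct (Rlt_dec (c b) (c a)); destruct (Rle_dec (c a) (c b)); destruct (Rle_dec (c b) (c a));
simpl; split; intro H; auto; try discriminate; try (destruct H as [H|[H1 H2]]; try lra; auto).
- right; split; [lra|auto].
Qed.

Lemma bef_irr a : ~ bef a a.
Proof. rewrite befP. intros [H|[_ H]]; [lra|]. by rewrite ltnn in H. Qed.

Lemma bef_asym a b : bef a b -> ~ bef b a.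
Proof. rewrite !befP. intros [H|[H1 H2]] [H'|[H1' H2']]; try lra.
have := ltn_trans H2 H2'. by rewrite ltnn. Qed.

Lemma bef_trans a b d : bef a b -> bef b d -> bef a d.
Proof. rewrite !befP. intros [H|[H1 H2]] [H'|[H1' H2']]; try (left; lra).
right; split; [lra|]. exact: ltn_trans H2 H2'. Qed.

Lemma bef_total a b : a <> b -> bef a b \/ bef b a.
Proof. intros Hne. rewrite !befP.
destruct (Rtotal_order (c a) (c b)) as [H|[H|H]]; try (right; left; lra); try (left; left; lra).
have Hr : enum_rank a <> enum_rank b by move=> /enum_rank_inj.
case: (ltngtP (enum_rank a) (enum_rank b)) => Hab.
- left; right; auto.
- right; right; auto.
- exfalso; apply Hr; apply: val_inj; exact Hab.
Qed.

Lemma bef_c a b : bef a b -> c b <= c a.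
Proof. rewrite befP; intros [H|[H _]]; lra. Qed.

Lemma last_ex n : forall S : {set V}, #|S| = n.+1 ->
  exists l, l \in S /\ forall j, j \in S -> j <> l -> bef j l.
Proof.
induction n as [|n IH]; intros S HS.
- move/eqP: HS => /cards1P [a ->]. exists a; split; [by rewrite in_set1|].
  intros j; rewrite in_set1 => /eqP -> H; by exfalso.
- have : (0 < #|S|)%N by rewrite HS. move=> /card_gt0P [a Ha].
  have HS' : #|S :\ a| = n.+1.
  { have := cardsD1 a S. rewrite Ha HS. rewrite add1n. by case. }
  destruct (IH _ HS') as [l' [Hl' Hb]].
  have Hla : l' <> a by move: Hl'; rewrite in_setD1 => /andP [/eqP ? _].
  have Hl'S : l' \in S by move: Hl'; rewrite in_setD1 => /andP [_ ?].
  destruct (@bef_total a l' (not_eq_sym Hla)) as [Hal|Hla'].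
  + exists l'; split; auto. intros j Hj Hne.
    destruct (eqVneq j a) as [->|Hja]; auto.
    apply Hb; auto. by rewrite in_setD1 Hja.
  + exists a; split; auto. intros j Hj Hne.
    destruct (eqVneq j l') as [->|Hjl]; auto.
    apply bef_trans with l'; auto. apply Hb.
    * rewrite in_setD1 Hj andbT. by apply/eqP.
    * by apply/eqP.
Qed.

Definition Pb l := [set j | bef j l].
Definition y l := f (l |: Pb l) - f (Pb l).

Lemma greedy_le n : forall S : {set V}, #|S| = n -> \big[Rplus/0]_(j in S) y j <= f S.
Proof.
induction n as [|n IH]; intros S HS.
- move/eqP: HS; rewrite cards_eq0 => /eqP ->. rewrite big_set0 f0. lra.
- destruct (last_ex n S HS) as [l [Hl Hb]].
  rewrite (big_setD1 _ Hl) /=.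
  have HS' : #|S :\ l| = n.
  { have := cardsD1 l S. rewrite Hl HS add1n. by case. }
  have H1 := IH _ HS'.
  have E1 : S :&: Pb l = S :\ l.
  { apply/setP => j. rewrite in_setI in_setD1 /Pb in_set.
    destruct (eqVneq j l) as [->|Hjl]; simpl.
    - have Hf : bef l l = false by apply/negP; apply bef_irr.
      by rewrite Hf andbF.
    - destruct (boolP (j \in S)) as [Hj|Hj]; simpl; auto.
      apply/idP; apply Hb; auto. by apply/eqP. }
  have E2 : S :|: Pb l = l |: Pb l.
  { apply/setP => j. rewrite in_setU in_setU1 /Pb in_set.
    destruct (eqVneq j l) as [->|Hjl]; simpl; [by rewrite Hl|].
    destruct (boolP (j \in S)) as [Hj|Hj]; simpl; auto.
    symmetry; apply/idP; apply Hb; auto. by apply/eqP. }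
  have Hs := f_sub S (Pb l). rewrite E1 E2 in Hs. have Hy : y l = f (l |: Pb l) - f (Pb l) by []. lra.
Qed.

Lemma greedy_eq n : forall T : {set V}, #|T| = n ->
  (forall j j', j \in T -> bef j' j -> j' \in T) -> \big[Rplus/0]_(j in T) y j = f T.
Proof.
induction n as [|n IH]; intros T HT Hd.
- move/eqP: HT; rewrite cards_eq0 => /eqP ->. rewrite big_set0 f0. lra.
- destruct (last_ex n T HT) as [l [Hl Hb]].
  rewrite (big_setD1 _ Hl) /=.
  have HT' : #|T :\ l| = n.
  { have := cardsD1 l T. rewrite Hl HT add1n. by case. }
  have E1 : T :\ l = Pb l.
  { apply/setP => j. rewrite in_setD1 /Pb in_set.
    destruct (eqVneq j l) as [->|Hjl]; simpl.
    - have Hf : bef l l = false by apply/negP; apply bef_irr.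
      by rewrite Hf.
    - apply/idP/idP => H.
      + apply Hb; auto. by apply/eqP.
      + exact: (Hd l). }
  rewrite IH; auto.
  + rewrite E1 /y. have -> : l |: Pb l = T.
    { rewrite -E1. by rewrite setD1K. }
    lra.
  + intros j j' Hj Hb'. move: Hj; rewrite in_setD1 => /andP [Hjl Hj].
    rewrite in_setD1 (Hd j j' Hj Hb') andbT.
    apply/eqP => Heq. subst j'.
    have Hjl' : j <> l by apply/eqP.
    have := Hb j Hj Hjl'. by apply bef_asym.
Qed.
End Greedy.



Lemma Rmax_seq (I : eqType) (s : seq I) (F : I -> R) : (forall i, 0 <= F i) ->
  (forall i, i \in s -> F i <= \big[Rmax/0]_(i <- s) F i) /\
  (\big[Rmax/0]_(i <- s) F i = 0 \/ exists i, i \in s /\ \big[Rmax/0]_(i <- s) F i = F i).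
Proof.
intros HF. induction s as [|a s [IH1 IH2]].
- rewrite big_nil. split; [by []| left; auto].
- rewrite big_cons. split.
  + intros i; rewrite in_cons => /orP [/eqP ->|Hi]; [apply Rmax_l|].
    eapply Rle_trans; [apply IH1; auto|apply Rmax_r].
  + destruct (Rle_dec (F a) (\big[Rmax/0]_(j <- s) F j)) as [H|H].
    * rewrite Rmax_right; auto. destruct IH2 as [->|[i [Hi ->]]]; [left; auto|].
      right; exists i; split; auto. by rewrite in_cons Hi orbT.
    * rewrite Rmax_left; [|lra]. right; exists a; split; auto. by rewrite in_cons eqxx.
Qed.

Lemma sum_ge0 (I : finType) (P : pred I) (F : I -> R) : (forall i, 0 <= F i) ->
  0 <= \big[Rplus/0]_(i | P i) F i.
Proof. intros HF. apply (big_ind (fun v => 0 <= v)); auto; intros; lra. Qed.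

Lemma sum_ge0' k (P : pred 'I_k) (F : 'I_k -> R) : (forall i, 0 <= F i) ->
  0 <= \big[Rplus/0]_(i < k | P i) F i.
Proof. intros HF. apply (big_ind (fun v => 0 <= v)); auto; intros; lra. Qed.

Lemma sum_mull (I : finType) (a : R) (F : I -> R) :
  \big[Rplus/0]_(i : I) (a * F i) = a * \big[Rplus/0]_(i : I) F i.
Proof.
apply (big_rec2 (fun y1 y2 => y1 = a * y2)); [ring|]. intros i y1 y2 _ ->; ring.
Qed.

Lemma Rsum_le k (F G : 'I_k -> R) : (forall i, F i <= G i) -> Rsum F <= Rsum G.
Proof. intros H. apply (big_ind2 (fun a b => a <= b)); auto; intros; lra. Qed.

Lemma Rsum_lin k (a h : 'I_k -> R) b :
  Rsum (fun i => a i + b - h i) = Rsum a + INR k * b - Rsum h.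
Proof.
unfold Rsum. rewrite (eq_bigr (fun i => a i + (b + (-1) * h i))); [|intros; ring].
rewrite big_split /= big_split /= sum_mull big_const_ord.
have -> : iter k (Rplus b) 0 = INR k * b.
{ elim: k {a h} => [|n IH]; [simpl; ring|]. rewrite iterS IH S_INR; ring. }
have E : \big[Rplus/0]_(i : 'I_k) h i = \big[Rplus/0]_(i < k) h i by []. rewrite E. ring.
Qed.

Lemma mix_identity k (X : 'I_k -> R) : (forall i, 0 <= X i) -> Rsum X = 1 ->
  Rsum (fun i => Rmin (X i) (Rmin (1 - Rmaxi X) (1/2))) = 2 * Rmin (1 - Rmaxi X) (1/2)
  /\ 0 <= 1 - Rmaxi X.
Proof.
intros Hx Hs.
have [Hub' Hex] : (forall i, X i <= Rmaxi X) /\ (Rmaxi X = 0 \/ exists i, Rmaxi X = X i).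
{ destruct (@Rmax_seq _ (index_enum 'I_k) X Hx) as [Hub Hex]. split.
  - intros i; exact (Hub i (mem_index_enum i)).
  - destruct Hex as [H|[i [_ H]]]; [left; exact H| right; exists i; exact H]. }
set M := Rmaxi X in Hub' Hex *.
destruct Hex as [H0|[i0 Hi0]].
- exfalso. have : Rsum X <= Rsum (fun _ : 'I_k => 0) by apply: Rsum_le; intros i; have := Hub' i; lra.
  intro H. have E : Rsum (fun _ : 'I_k => 0) = 0 by unfold Rsum; rewrite big1. lra.
- have Hsplit : Rsum X = X i0 + \big[Rplus/0]_(i < k | i != i0) X i.
  { unfold Rsum. by rewrite (bigD1 i0). }
  have Hother : forall i, i != i0 -> X i <= 1 - M.
  { intros i Hi. have : X i0 + X i <= 1; [|lra].
    rewrite -Hs Hsplit. rewrite (bigD1 i) //=.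
    have := @sum_ge0' _ (fun l => (l != i0) && (l != i)) _ Hx. intro H. apply Rplus_le_compat_l. rewrite -{1}(Rplus_0_r (X i)). apply Rplus_le_compat_l. exact H. }
  have HM1 : M <= 1 by have := @sum_ge0' _ (fun l => l != i0) _ Hx; lra.
  split; [|lra].
  unfold Rsum. rewrite (bigD1 i0) //=.
  rewrite (eq_bigr (fun i => X i)).
  2:{ intros i Hi. have := Hother i Hi. have := Hub' i.
      unfold Rmin; repeat destruct Rle_dec; lra. }
  have : \big[Rplus/0]_(i < k | i != i0) X i = 1 - M by lra.
  move=> ->. rewrite Hi0.
  unfold Rmin; repeat destruct Rle_dec; lra.
Qed.



Lemma In_of_mem (T : eqType) (a : T) (s : seq T) : a \in s -> In a s.
Proof. elim: s => [|b s IH] //=. rewrite in_cons => /orP [/eqP ->|H]; [left|right]; auto. Qed.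

Section Main.
Variables (V : finType) (f : {set V} -> R) (k : nat) (x : 'I_k -> V -> R).
Hypotheses (f_nonneg : forall A, 0 <= f A) (f_sub : submodular f) (f0 : f set0 = 0)
  (x_nonneg : forall i j, 0 <= x i j) (x_sum : forall j, Rsum (fun i => x i j) = 1).

Let c := fun j => 1 - Rmaxi (fun i => x i j).
Let L := (List.concat (List.map (fun j => List.map (fun i => x i j) (enum 'I_k)) (enum V)))
          ++ List.map c (enum V).

Lemma In_x i j : In (x i j) L.
Proof.
apply in_or_app; left. apply in_concat. exists (List.map (fun i => x i j) (enum 'I_k)).
split.
- apply (in_map (fun j0 => List.map (fun i => x i j0) (enum 'I_k))); apply In_of_mem; by rewrite mem_enum.
- apply (in_map (fun i => x i j)); apply In_of_mem; by rewrite mem_enum.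
Qed.

Lemma In_c j : In (c j) L.
Proof. apply in_or_app; right. apply (in_map c); apply In_of_mem; by rewrite mem_enum. Qed.

Lemma pcA i : pc L (fun t => Aset x i t).
Proof.
intros t1 t2 H Hc. apply/setP => j. rewrite /Aset !in_set /Rltb.
have := Hc _ (In_x i j).
destruct (Rlt_dec t1 (x i j)); destruct (Rlt_dec t2 (x i j)); auto; intro HH; exfalso; apply HH; lra.
Qed.

Lemma pcB : pc L (fun t => Bset x t).
Proof.
intros t1 t2 H Hc. apply/setP => j. rewrite /Bset !in_set /Rleb.
have := Hc _ (In_c j). rewrite /c.
destruct (Rle_dec t1 _); destruct (Rle_dec t2 _); auto; intro HH; exfalso; try apply HH; lra.
Qed.

Lemma exAB (G : {set V} -> {set V} -> R) i : ex_RInt (fun t => G (Aset x i t) (Bset x t)) 0 (1/2).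
Proof.
apply (pc_ex L); [lra|]. intros t1 t2 H Hc. by rewrite (pcA i t1 t2 H Hc) (pcB t1 t2 H Hc).
Qed.

Lemma exB (G : {set V} -> R) : ex_RInt (fun t => G (Bset x t)) 0 (1/2).
Proof.
apply (pc_ex L); [lra|]. intros t1 t2 H Hc. by rewrite (pcB t1 t2 H Hc).
Qed.

Lemma c_ge0 j : 0 <= c j.
Proof. exact: (proj2 (@mix_identity _ (fun i => x i j) (fun i => x_nonneg i j) (x_sum j))). Qed.

Let yy := @y V f c.
Let mA i j := Rmin (x i j) (Rmin (c j) (1/2)).
Let mB j := Rmin (c j) (1/2).

Lemma intA i j : RInt (fun t => if j \in Aset x i t :&: Bset x t then yy j else 0) 0 (1/2)
  = yy j * mA i j.
Proof.
have Hc := c_ge0 j. have Hx := x_nonneg i j.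
apply ind_int.
- rewrite /mA; unfold Rmin; repeat destruct Rle_dec; lra.
- intros t Ht. rewrite in_setI /Aset /Bset !in_set /Rltb /Rleb.
  destruct Rlt_dec; [|exfalso; move: Ht; rewrite /mA; unfold Rmin; repeat destruct Rle_dec; lra].
  destruct Rle_dec; [by []|exfalso; move: Ht; rewrite /mA /c; unfold Rmin; repeat destruct Rle_dec; lra].
- intros t Ht. rewrite in_setI /Aset /Bset !in_set /Rltb /Rleb.
  destruct Rlt_dec; [|by []].
  destruct Rle_dec; [|by []]. exfalso; move: Ht; rewrite /mA /c; unfold Rmin; repeat destruct Rle_dec; lra.
Qed.

Lemma intB j : RInt (fun t => if j \in Bset x t then yy j else 0) 0 (1/2) = yy j * mB j.
Proof.
have Hc := c_ge0 j.
apply ind_int.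
- rewrite /mB; unfold Rmin; repeat destruct Rle_dec; lra.
- intros t Ht. rewrite /Bset !in_set /Rleb.
  destruct Rle_dec; [by []|exfalso; move: Ht; rewrite /mB /c; unfold Rmin; repeat destruct Rle_dec; lra].
- intros t Ht. rewrite /Bset !in_set /Rleb.
  destruct Rle_dec; [|by []]. exfalso; move: Ht; rewrite /mB /c; unfold Rmin; repeat destruct Rle_dec; lra.
Qed.

Lemma intY i : RInt (fun t => \big[Rplus/0]_(j in Aset x i t :&: Bset x t) yy j) 0 (1/2)
  = \big[Rplus/0]_(j : V) (yy j * mA i j).
Proof.
rewrite (RInt_ext _ (fun t => \big[Rplus/0]_(j <- index_enum V) (if j \in Aset x i t :&: Bset x t then yy j else 0))).
2:{ intros; by rewrite big_mkcond. }
have HF : forall j, ex_RInt (fun t => if j \in Aset x i t :&: Bset x t then yy j else 0) 0 (1/2).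
{ intros j. exact: (exAB (fun A B => if j \in A :&: B then yy j else 0) i). }
rewrite (proj2 (@RInt_sum _ (index_enum V) _ 0 (1/2) HF)).
apply eq_bigr => j _. apply intA.
Qed.

Lemma intBY : RInt (fun t => f (Bset x t)) 0 (1/2) = \big[Rplus/0]_(j : V) (yy j * mB j).
Proof.
rewrite (RInt_ext _ (fun t => \big[Rplus/0]_(j <- index_enum V) (if j \in Bset x t then yy j else 0))).
2:{ intros t _. rewrite -big_mkcond. symmetry. apply (@greedy_eq V f c f0 #|Bset x t| (Bset x t)); auto.
    intros j j' Hj Hb. have Hbc := @bef_c V c _ _ Hb. move: Hj; rewrite /Bset !in_set /Rleb.
    destruct (Rle_dec t (1 - Rmaxi (fun i => x i j))) as [r1|r1]; [|by []].
    destruct (Rle_dec t (1 - Rmaxi (fun i => x i j'))) as [r2|r2]; [by []|].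
    unfold c in Hbc. lra. }
have HF : forall j, ex_RInt (fun t => if j \in Bset x t then yy j else 0) 0 (1/2).
{ intros j. exact: (exB (fun B => if j \in B then yy j else 0)). }
rewrite (proj2 (@RInt_sum _ (index_enum V) _ 0 (1/2) HF)).
apply eq_bigr => j _. apply intB.
Qed.

Lemma key_ineq : Rsum (fun i => RInt (fun t => f (Aset x i t :&: Bset x t)) 0 (1/2))
  >= 2 * RInt (fun t => f (Bset x t)) 0 (1/2).
Proof.
apply Rle_ge.
apply Rle_trans with (Rsum (fun i => RInt (fun t => \big[Rplus/0]_(j in Aset x i t :&: Bset x t) yy j) 0 (1/2))).
2:{ apply: Rsum_le => i. apply RInt_le; [lra| |exact: (exAB (fun A B => f (A :&: B)) i)|].
    - exact: (exAB (fun A B => \big[Rplus/0]_(j in A :&: B) yy j) i).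
    - intros t _. exact: (@greedy_le V f c f_sub f0 _ _ erefl). }
right. rewrite intBY. unfold Rsum. rewrite (eq_bigr (fun i => \big[Rplus/0]_(j : V) (yy j * mA i j))).
2:{ intros i _. apply intY. }
rewrite exchange_big /=.
rewrite -(@sum_mull _ 2). apply eq_bigr => j _.
rewrite (@sum_mull _ (yy j) (fun i => mA i j)).
have := proj1 (@mix_identity _ (fun i => x i j) (fun i => x_nonneg i j) (x_sum j)).
rewrite /Rsum /mA /mB /c => ->. ring.
Qed.
End Main.



Lemma RInt_lin3 (g1 g2 g3 : R -> R) :
  ex_RInt g1 0 (1/2) -> ex_RInt g2 0 (1/2) -> ex_RInt g3 0 (1/2) ->
  RInt (fun t => g1 t + g2 t - g3 t) 0 (1/2) = RInt g1 0 (1/2) + RInt g2 0 (1/2) - RInt g3 0 (1/2).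
Proof.
intros H1 H2 H3.
rewrite (RInt_ext _ (fun t => minus (plus (g1 t) (g2 t)) (g3 t))).
2:{ intros; rewrite /minus /plus /opp /=. ring. }
rewrite (RInt_minus (fun t => plus (g1 t) (g2 t)) g3); auto.
2:{ apply (ex_RInt_plus g1 g2); auto. }
rewrite (RInt_plus g1 g2); auto.
Qed.

Theorem lemma6 (V : finType) (f : {set V} -> R) (k : nat)
  (t : 'I_k -> V) (x : 'I_k -> V -> R)
  (f_nonneg : forall A, 0 <= f A)
  (f_sub : submodular f)
  (f0 : f set0 = 0)
  (t_inj : injective t)
  (x_nonneg : forall i j, 0 <= x i j)
  (x_sum : forall j, Rsum (fun i => x i j) = 1)
  (x_term : forall i, x i (t i) = 1) :
  Rsum (fun i => RInt (fun th => f (Aset x i th)) 0 (1/2))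
  >= Rsum (fun i => RInt (fun th => f (Aset x i th :|: Bset x th)) 0 (1/2))
     - (INR k - 2) * RInt (fun th => f (Bset x th)) 0 (1/2).
Proof.
have Hkey := @key_ineq V f k x f_sub f0 x_nonneg x_sum.
set b := RInt (fun th => f (Bset x th)) 0 (1/2) in Hkey *.
have H1 : forall i, RInt (fun th => f (Aset x i th :|: Bset x th)) 0 (1/2) <=
   RInt (fun th => f (Aset x i th)) 0 (1/2) + b - RInt (fun th => f (Aset x i th :&: Bset x th)) 0 (1/2).
{ intros i. rewrite /b -RInt_lin3.
  - apply RInt_le; [lra| exact: (@exAB V k x (fun A B => f (A :|: B)) i)| |].
    + exact: (@exAB V k x (fun A B => f A + f B - f (A :&: B)) i).
    + intros th _. have := f_sub (Aset x i th) (Bset x th). lra.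
  - exact: (@exAB V k x (fun A B => f A) i).
  - exact: (@exB V k x (fun B => f B)).
  - exact: (@exAB V k x (fun A B => f (A :&: B)) i). }
have H2 := Rsum_le _ _ _ H1. rewrite Rsum_lin in H2. lra.
Qed.
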